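(* Let $P = \{p_1,\dots,p_s\}$ and $P' = \{p'_1,\dots,p'_s\}$ be width-$k$ puzzles of size $s$, each with a fixed enumeration of its rows. If there is a graph isomorphism $\varphi : G_P \to G_{P'}$ that maps row vertices to row vertices, column vertices to column vertices, element vertices to element vertices, and cell vertices to cell vertices, then there exist $\rho \in \mathrm{Sym}([k])$ and $\delta \in \mathrm{Sym}(\{1,2,3\})$ such that $P' = \{(\delta(r_{\rho(c)}))_{c \in [k]} : r \in P\}$. Consequently $P$ is a strong USP if and only if $P'$ is a strong USP.
   Context: A width-$k$ puzzle is a finite set $P \subseteq \{1,2,3\}^k$; for $r\in P$, $r_c$ is its $c$-th coordinate. For a puzzle $P=\{p_1,\dots,p_s\}$ with rows enumerated, $G_P$ is the undirected graph with vertex set the disjoint union of row vertices $\{\mathrm{row}_i\}_{i\in[s]}$, column vertices $\{\mathrm{col}_c\}_{c\in[k]}$, element vertices $\{e_j\}_{j\in\{1,2,3\}}$, and cell vertices $\{v_{i,c}\}_{(i,c)\in[s]\times[k]}$, where each cell vertex $v_{i,c}$ is adjacent exactly to $\mathrm{row}_i$, $\mathrm{col}_c$, and $e_{(p_i)_c}$, and there are no other edges. $P$ is a strong USP if for all $\pi_1,\pi_2,\pi_3 \in \mathrm{Sym}(P)$, either $\pi_1=\pi_2=\pi_3$, or there exist $r \in P$ and $c \in [k]$ such that exactly two of $(\pi_1(r))_c = 1$, $(\pi_2(r))_c = 2$, $(\pi_3(r))_c = 3$ hold. *)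

(* Defs.v *)
From mathcomp Require Import all_boot fingroup perm.
Set Implicit Arguments. Unset Strict Implicit. Unset Printing Implicit Defensive.

(* Entries {1,2,3} are encoded as 'I_3 = {0,1,2}: value j+1 is encoded by j. *)
Definition row_t (k : nat) := {ffun 'I_k -> 'I_3}.
Definition puzzle (k : nat) := {set row_t k}.

Definition e1 : 'I_3 := @Ordinal 3 0 isT.
Definition e2 : 'I_3 := @Ordinal 3 1 isT.
Definition e3 : 'I_3 := @Ordinal 3 2 isT.

(* Sym(P): bijections of P, represented as permutations of the row type
   supported on P (each bijection P -> P extends uniquely). *)
Definition strong_USP (k : nat) (P : puzzle k) : Prop :=
  forall pi1 pi2 pi3 : {perm row_t k},
    perm_on P pi1 -> perm_on P pi2 -> perm_on P pi3 ->
    (pi1 = pi2 /\ pi2 = pi3) \/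
    exists r, exists c : 'I_k, r \in P /\
      ((pi1 r c == e1) + (pi2 r c == e2) + (pi3 r c == e3) = 2)%N.

Definition vertex (s k : nat) : finType :=
  (('I_s + 'I_k) + ('I_3 + ('I_s * 'I_k)))%type.

Definition vrow s k (i : 'I_s) : vertex s k := inl (inl i).
Definition vcol s k (c : 'I_k) : vertex s k := inl (inr c).
Definition velt s k (e : 'I_3) : vertex s k := inr (inl e).
Definition vcell s k (i : 'I_s) (c : 'I_k) : vertex s k := inr (inr (i, c)).

Definition vkind s k (v : vertex s k) : nat :=
  match v with
  | inl (inl _) => 0 | inl (inr _) => 1
  | inr (inl _) => 2 | inr (inr _) => 3
  end.

Definition cell_edge s k (p : 'I_s -> row_t k) (u v : vertex s k) : bool :=
  match u with
  | inr (inr (i, c)) =>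
      (v == vrow k i) || (v == vcol s c) || (v == velt s k (p i c))
  | _ => false
  end.

Definition G_adj s k (p : 'I_s -> row_t k) (u v : vertex s k) : bool :=
  cell_edge p u v || cell_edge p v u.

Definition puzzle_of s k (p : 'I_s -> row_t k) : puzzle k := [set p i | i : 'I_s].

(* Main.v *)
Require Import Defs.
From mathcomp Require Import all_boot fingroup perm.
Set Implicit Arguments. Unset Strict Implicit.

Definition Fm k (rho : {perm 'I_k}) (delta : {perm 'I_3}) (r : row_t k) : row_t k :=
  [ffun c => delta (r (rho c))].

Lemma Fm_inj k rho delta : injective (@Fm k rho delta).
Proof.
move=> r1 r2 /ffunP H; apply/ffunP => c.
have := H ((rho^-1)%g c); rewrite !ffunE permKV; exact: perm_inj.
Qed.

Definition tri k (a b c : {perm row_t k}) (j : 'I_3) : {perm row_t k} :=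
  if val j == 0 then a else if val j == 1 then b else c.

Lemma sum3 k (a b c : {perm row_t k}) r x :
  ((a r x == e1) + (b r x == e2) + (c r x == e3))%N =
  \sum_(j < 3) (tri a b c j r x == j).
Proof.
rewrite !big_ord_recr big_ord0 /=.
have -> : (ord_max : 'I_3) = e3 by apply: val_inj.
have -> : (widen_ord (leqnSn 2) ord_max : 'I_3) = e2 by apply: val_inj.
have -> : (widen_ord (leqnSn 2) (widen_ord (leqnSn 1) ord_max) : 'I_3) = e1 by apply: val_inj.
by [].
Qed.

Lemma transfer k rho delta (P : puzzle k) :
  strong_USP P -> strong_USP [set Fm rho delta r | r in P].
Proof.
move=> HP pi1 pi2 pi3 H1 H2 H3.
pose F := perm (@Fm_inj k rho delta).
have FE : forall r, F r = Fm rho delta r by move=> r; rewrite permE.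
pose q := tri pi1 pi2 pi3.
pose cj (pi : {perm row_t k}) := (F * pi * F^-1)%g.
have cjE : forall pi r, cj pi r = (F^-1)%g (pi (F r)) by move=> pi r; rewrite !permM.
have cj_on : forall pi, perm_on [set Fm rho delta r | r in P] pi -> perm_on P (cj pi).
  move=> pi Hpi; apply/subsetP => x; rewrite inE cjE => Hx.
  have : pi (F x) != F x by apply: contra Hx => /eqP ->; rewrite permK.
  move=> Hne; have : F x \in [set Fm rho delta r | r in P].
    by apply/negPn/negP => /(out_perm Hpi) E; rewrite E eqxx in Hne.
  rewrite FE mem_imset //; exact: Fm_inj.
have q_on : forall j, perm_on [set Fm rho delta r | r in P] (q j).
  by move=> j; rewrite /q /tri; case: ifP => _ //; case: ifP.
pose sg m := cj (q (delta m)).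
have := HP (sg e1) (sg e2) (sg e3) (cj_on _ (q_on _)) (cj_on _ (q_on _)) (cj_on _ (q_on _)).
case=> [[E12 E23] | [r [c [Hr Hs]]]].
- have Hall : forall m, sg m = sg e1.
    move=> [[|[|[|m]]] Hm] //.
    + by rewrite (_ : Ordinal Hm = e1) //; exact: val_inj.
    + by rewrite (_ : Ordinal Hm = e2) ?E12 //; exact: val_inj.
    + by rewrite (_ : Ordinal Hm = e3) ?E12 ?E23 //; exact: val_inj.
  have cj_inj : injective cj by move=> a b; rewrite /cj => /mulIg /mulgI.
  have Hq : forall j, q j = q e1.
    move=> j; apply: cj_inj; have := Hall ((delta^-1)%g j); rewrite /sg permKV => ->.
    by have := Hall ((delta^-1)%g e1); rewrite /sg permKV => ->.
  move: (Hq e2) (Hq e3); rewrite /q /tri /= => -> ->; by left.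
- right; exists (F r), ((rho^-1)%g c); split; first by rewrite FE imset_f.
  rewrite sum3 -/q; apply: etrans Hs; rewrite sum3.
  rewrite (reindex_inj (@perm_inj _ delta)) /=.
  apply: eq_bigr => m _.
  have -> : q (delta m) (F r) = F (sg m r) by rewrite /sg cjE permKV.
  rewrite FE /Fm ffunE permKV (inj_eq (@perm_inj _ delta)).
  congr (nat_of_bool (_ == _)).
  case: m => [[|[|[|m]]] Hm] //.
  + by rewrite (_ : Ordinal Hm = e1) //; exact: val_inj.
  + by rewrite (_ : Ordinal Hm = e2) //; exact: val_inj.
  + by rewrite (_ : Ordinal Hm = e3) //; exact: val_inj.
Qed.

Lemma transfer_iff k rho delta (P : puzzle k) :
  strong_USP P <-> strong_USP [set Fm rho delta r | r in P].
Proof.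
split; first exact: transfer.
move/(@transfer _ (rho^-1)%g (delta^-1)%g).
rewrite -imset_comp.
have -> : [set (Fm (rho^-1)%g (delta^-1)%g \o Fm rho delta) x | x in P] = [set x | x in P].
  apply: eq_imset => r /=; apply/ffunP => c; rewrite !ffunE permKV permK //.
by rewrite imset_id.
Qed.

Section Main.
Variables (k s : nat) (p p' : 'I_s -> row_t k)
  (phi : vertex s k -> vertex s k) (Hphi : bijective phi)
  (Hadj : forall u v, G_adj p' (phi u) (phi v) = G_adj p u v)
  (Hkind : forall v, vkind (phi v) = vkind v).

Definition rowf i := match phi (vrow k i) with inl (inl j) => j | _ => i end.
Definition colf c := match phi (vcol s c) with inl (inr j) => j | _ => c end.
Definition eltf e := match phi (velt s k e) with inr (inl j) => j | _ => e end.

Lemma rowfE i : phi (vrow k i) = vrow k (rowf i).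
Proof. rewrite /rowf; have := Hkind (vrow k i); by case: (phi _) => [[?|?]|[?|?]]. Qed.
Lemma colfE c : phi (vcol s c) = vcol s (colf c).
Proof. rewrite /colf; have := Hkind (vcol s c); by case: (phi _) => [[?|?]|[?|?]]. Qed.
Lemma eltfE e : phi (velt s k e) = velt s k (eltf e).
Proof. rewrite /eltf; have := Hkind (velt s k e); by case: (phi _) => [[?|?]|[?|?]]. Qed.

Lemma phi_inj : injective phi. Proof. exact: bij_inj. Qed.

Lemma rowf_inj : injective rowf.
Proof. move=> i j E; have := rowfE i; rewrite E -rowfE => /phi_inj; by case. Qed.
Lemma colf_inj : injective colf.
Proof. move=> i j E; have := colfE i; rewrite E -colfE => /phi_inj; by case. Qed.
Lemma eltf_inj : injective eltf.
Proof. move=> i j E; have := eltfE i; rewrite E -eltfE => /phi_inj; by case. Qed.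

Lemma key i c : p' (rowf i) (colf c) = eltf (p i c).
Proof.
have : vkind (phi (vcell i c)) = 3 by rewrite Hkind.
case E: (phi (vcell i c)) => [[]|[|[i' c']]] // _.
have H1 := Hadj (vcell i c) (vrow k i).
have H2 := Hadj (vcell i c) (vcol s c).
have H3 := Hadj (vcell i c) (velt s k (p i c)).
rewrite E rowfE /G_adj /cell_edge /= !eqxx /= ?orbT in H1.
rewrite E colfE /G_adj /cell_edge /= !eqxx /= ?orbT in H2.
rewrite E eltfE /G_adj /cell_edge /= !eqxx /= ?orbT in H3.
rewrite /vrow /vcol /velt /= !orbF in H1 H2 H3.
by move/eqP: H1 => [->]; move/eqP: H2 => [->]; move/eqP: H3 => [->].
Qed.
End Main.

Unset Implicit Arguments.
Theorem mainTheorem8 (k s : nat) (p p' : 'I_s -> row_t k)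
  (Hp : injective p) (Hp' : injective p')
  (phi : vertex s k -> vertex s k) (Hphi : bijective phi)
  (Hadj : forall u v, G_adj p' (phi u) (phi v) = G_adj p u v)
  (Hkind : forall v, vkind (phi v) = vkind v) :
  (exists (rho : {perm 'I_k}) (delta : {perm 'I_3}),
      puzzle_of p' = [set [ffun c => delta (r (rho c))] | r : row_t k in puzzle_of p])
  /\ (strong_USP (puzzle_of p) <-> strong_USP (puzzle_of p')).
Proof.
pose C := perm (colf_inj Hphi Hkind).
pose D := perm (eltf_inj Hphi Hkind).
pose R := perm (rowf_inj Hphi Hkind).
have HF : forall i, Fm (C^-1)%g D (p i) = p' (R i).
  move=> i; apply/ffunP => c.
  rewrite /Fm ffunE.
  have Hc := permKV C c.
  move: ((C^-1)%g c) Hc => c' Hc.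
  rewrite [D _]permE [R i]permE -(key Hadj Hkind).
  by rewrite permE in Hc; rewrite Hc.
have Hset : puzzle_of p' = [set Fm (C^-1)%g D r | r in puzzle_of p].
  rewrite /puzzle_of -imset_comp; apply/setP => x; apply/imsetP/imsetP => [[j _ ->]|[i _ ->]].
  - by exists ((R^-1)%g j) => //=; rewrite HF permKV.
  - by exists (R i) => //=; rewrite HF.
split; first by exists (C^-1)%g, D.
by rewrite Hset; apply: transfer_iff.
Qed.
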